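(* Let $q$ be an odd prime and let $(G,H,T)$ be the envelope of a right conjugacy closed loop of order $2q$. Let $K$ be a subgroup with $H\lneq K\lneq G$, $|G:K|=q$ and $|K:H|=2$. If $K\trianglelefteq G$, then $G$ is abelian and $H=1$.
   Context: For a finite loop $\mathcal{L}$ with identity $e$: $G=\langle R_a\mid a\in\mathcal L\rangle$ with $R_a\colon x\mapsto xa$, $H$ the stabilizer of $e$ in $G$, $T=\{R_a\}$; $(G,H,T)$ is the envelope; the loop is right conjugacy closed if $T$ is a union of conjugacy classes of $G$. *)

(* Defs.v *)
From mathcomp Require Import all_boot all_order all_algebra all_fingroup.
Set Implicit Arguments. Unset Strict Implicit. Unset Printing Implicit Defensive.
Import GroupScope.

Definition is_loop (L : finType) (mul : L -> L -> L) (e : L) : Prop :=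
  [/\ forall x, mul e x = x /\ mul x e = x,
      forall a, bijective (fun x => mul a x) &
      forall a, bijective (fun x => mul x a)].

Definition rtrans (L : finType) (mul : L -> L -> L) : {set {perm L}} :=
  [set p : {perm L} | [exists a : L, [forall x : L, p x == mul x a]]].

Definition env_G (L : finType) (mul : L -> L -> L) : {group {perm L}} :=
  <<rtrans mul>>%G.

Definition env_H (L : finType) (mul : L -> L -> L) (e : L) : {group {perm L}} :=
  'C_(env_G mul)[e | 'P]%G.

Definition rcc (L : finType) (mul : L -> L -> L) : Prop :=
  forall t, t \in rtrans mul -> t ^: env_G mul \subset rtrans mul.

(* Main.v *)
Require Import Defs.
From mathcomp Require Import all_boot all_order all_algebra all_fingroup all_solvable.
Import GroupScope.

Lemma sq_index2 (gT : finGroupType) (A B : {group gT}) x :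
  A \subset B -> #|B : A| <= 2 -> x \in B -> x ^+ 2 \in A.
Proof.
move=> sAB iAB Bx.
have := indexg_gt0 B A.
case E: #|B : A| iAB => [|[|[|n]]] // _ _.
  by rewrite (index1g sAB E) groupX.
case Ax: (x \in A); first by rewrite groupX.
have xD : x \in B :\: A by rewrite inE Ax Bx.
apply/negPn/negP => nA.
have : x ^+ 2 \in B :\: A by rewrite inE nA groupX.
rewrite -(rcoset_index2 sAB E xD) => /rcosetP[a Aa].
rewrite expgS expg1 => /(mulIg x) xa.
by move: Ax; rewrite xa Aa.
Qed.

Theorem lemma5p11 (q : nat) (L : finType) (mul : L -> L -> L) (e : L)
    (K : {group {perm L}}) :
  prime q -> odd q ->
  is_loop mul e -> rcc mul -> #|L| = (2 * q)%N ->
  env_H mul e \proper K -> K \proper env_G mul ->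
  #|env_G mul : K| = q -> #|K : env_H mul e| = 2 ->
  K <| env_G mul ->
  abelian (env_G mul) /\ env_H mul e = 1%G.
Proof.
move=> pq oq [idl _ bijr] Hrcc cardL /proper_sub sHK /proper_sub sKG iGK iKH nKG.
set T := rtrans mul in Hrcc *.
set G := env_G mul in sKG iGK nKG Hrcc *.
set H := env_H mul e in sHK iKH *.
have TG : T \subset G by exact: subset_gen.
have TP u : u \in T -> exists a, forall x, u x = mul x a.
  by rewrite inE => /existsP[a /forallP Ha]; exists a => x; apply/eqP.
have evinj : {in T &, injective (fun u : {perm L} => u e)}.
  move=> u v /TP[a Ha] /TP[b Hb] /=; rewrite Ha Hb !(proj1 (idl _)) => ab.
  by apply/permP => x; rewrite Ha Hb ab.
have trans x : exists2 g, g \in G & g e = x.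
  have inj : injective (fun y => mul y x) by apply: bij_inj.
  exists (perm inj); last by rewrite permE (proj1 (idl _)).
  apply: (subsetP TG); rewrite inE; apply/existsP; exists x.
  by apply/forallP => y; rewrite permE.
have Hfix h : h \in H -> h e = e.
  by rewrite inE => /andP[_ /astab1P].
have centH w : w \in H -> w \in 'C(G) -> w = 1.
  move=> Hw cw; apply/permP => x; have [g Gg <-] := trans x.
  have cwg : commute w g by have := centP cw g Gg.
  by rewrite perm1 -permM -cwg permM Hfix.
have cardO : #|orbit 'P K e| = 2.
  rewrite card_orbit -iKH; congr #|K : _|.
  apply/eqP; rewrite eqEsubset; apply/andP; split.
    by apply/subsetP => k /setIP[Kk Ck]; rewrite inE Ck (subsetP sKG).
  by apply/subsetP => k Hk; rewrite inE (subsetP sHK) //; case/setIP: Hk.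
have derK : [~: G, G] \subset K.
  apply: (der1_min (normal_norm nKG)); apply: cyclic_abelian; apply: prime_cyclic.
  by rewrite card_quotient ?normal_norm // iGK.
have classT t : t \in T -> #|t ^: G| <= 2.
  move=> Tt; rewrite -cardO.
  have Gt : t \in G by exact: (subsetP TG).
  have sub : t ^: G \subset T by apply: Hrcc.
  rewrite -(@card_in_imset _ _ (fun u : {perm L} => t^-1 (u e))); last first.
    move=> u v /(subsetP sub) Tu /(subsetP sub) Tv /= /perm_inj.
    exact: evinj.
  apply: subset_leq_card; apply/subsetP => _ /imsetP[u /imsetP[g Gg ->] ->].
  have -> : t^-1 ((t ^ g) e) = ([~ g, t^-1]) e.
    by rewrite -permM commgEl !conjgE invgK !mulgA.
  have : [~ g, t^-1] \in K by apply: (subsetP derK); apply: mem_commg; rewrite ?groupV.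
  by move/(mem_orbit 'P e).
have sq g t : g \in G -> t \in T -> g ^+ 2 \in 'C[t].
  move=> Gg Tt.
  have : g ^+ 2 \in 'C_G[t].
    apply: (@sq_index2 _ 'C_G[t]%G G) => //; first exact: subsetIl.
    by rewrite /= index_cent1 classT.
  by case/setIP.
have qG : q %| #|G| by rewrite -(Lagrange sKG) iGK dvdn_mull.
have [z Gz oz] := Cauchy pq qG.
have zC : z \in 'C(G).
  rewrite /G /env_G /= cent_gen; apply/centP => t Tt.
  have Gt : t \in G by exact: (subsetP TG).
  have c2 : commute t (z ^+ 2) by apply/esym/cent1P; apply: sq.
  have -> : z = (z ^+ 2) ^+ (q.+1)./2.
    have hq : q = (q./2).*2.+1 by rewrite -{1}(odd_double_half q) oq add1n.
    have zq : z ^+ q = 1 by rewrite -oz expg_order.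
    rewrite -expgM mul2n.
    have -> : (q.+1)./2 = (q./2).+1 by rewrite {1}hq -doubleS doubleK.
    by rewrite doubleS -hq expgS zq mulg1.
  by apply/commute_sym/commuteX.
have zK : z \notin K.
  apply/negP => Kz.
  have H2 : z ^+ 2 \in H by apply: (@sq_index2 _ H K) => //; rewrite iKH.
  have : z ^+ 2 = 1 by apply: centH => //; rewrite groupX.
  move/eqP; rewrite -order_dvdn oz => /dvdn_leq /= q2.
  have q1 := prime_gt1 pq.
  have : q = 2 by apply/eqP; rewrite eqn_leq q2.
  by move=> qe; move: oq; rewrite qe.
have TI : K :&: <[z]> = 1.
  by rewrite setIC prime_TIg // ?cycle_subG // -orderE oz.
have GKz : G :=: K * <[z]>.
  apply/esym/eqP; rewrite eqEcard mul_subG ?cycle_subG //= TI_cardMg //.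
  by rewrite -orderE oz -iGK Lagrange.
have zCG g : g \in G -> commute g z.
  by move=> Gg; have := centP zC g Gg.
have nHG : G \subset 'N(H).
  rewrite GKz mul_subG //.
    by apply: normal_norm; apply: index2_normal.
  rewrite cycle_subG; apply: (subsetP (cent_sub H)).
  by apply: (subsetP (centS (subset_trans sHK sKG))).
have H1 : H = 1%G.
  apply/trivGP/subsetP => h Hh; rewrite inE; apply/eqP/permP => x.
  have [g Gg <-] := trans x.
  have : h ^ g^-1 \in H by rewrite memJ_norm // (subsetP nHG) ?groupV.
  move/Hfix; rewrite conjgE invgK !permM => /(congr1 g).
  by rewrite permKV perm1.
split => //.
rewrite GKz abelianM cycle_abelian /=.
apply/andP; split.
  apply: cyclic_abelian; apply: prime_cyclic.
  by rewrite -(Lagrange sHK) iKH H1 cards1.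
rewrite cycle_subG; apply: (subsetP (centS sKG)) => //.
Qed.
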